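(* Let $(A,\circ,[\cdot,\cdot])$ be a dual pre-Poisson algebra. There is a compatible pre-dual pre-Poisson algebra structure on $(A,\circ,[\cdot,\cdot])$ if and only if there exists an invertible $\mathcal{O}$-operator on $(A,\circ,[\cdot,\cdot])$ (associated to some representation).
   Context: Field $\mathbb{F}$ of characteristic $0$. A dual pre-Poisson algebra $(A,\circ,[\cdot,\cdot])$: $x\circ(y\circ z)=(x\circ y)\circ z=(y\circ x)\circ z$; $[x,[y,z]]=[[x,y],z]+[y,[x,z]]$; $[x,y\circ z]=[x,y]\circ z+y\circ[x,z]$; $[x\circ y,z]=x\circ[y,z]+y\circ[x,z]$; $[x,y]\circ z=-[y,x]\circ z$. A representation of it is $(V;l_\circ,r_\circ,l_{[\cdot,\cdot]},r_{[\cdot,\cdot]})$, with $V$ a vector space and linear maps $A\to\mathrm{End}(V)$ satisfying, for all $x,y\in A$: $r_\circ(x)r_\circ(y)=r_\circ(y\circ x)=l_\circ(y)r_\circ(x)=r_\circ(x)l_\circ(y)$; $l_\circ(x\circ y)=l_\circ(x)l_\circ(y)=l_\circ(y)l_\circ(x)$; $l_{[\cdot,\cdot]}([x,y])=l_{[\cdot,\cdot]}(x)l_{[\cdot,\cdot]}(y)-l_{[\cdot,\cdot]}(y)l_{[\cdot,\cdot]}(x)$; $r_{[\cdot,\cdot]}([x,y])=r_{[\cdot,\cdot]}(y)r_{[\cdot,\cdot]}(x)+l_{[\cdot,\cdot]}(x)r_{[\cdot,\cdot]}(y)$; $r_{[\cdot,\cdot]}(x)r_{[\cdot,\cdot]}(y)=-r_{[\cdot,\cdot]}(x)l_{[\cdot,\cdot]}(y)$;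 $r_{[\cdot,\cdot]}(x\circ y)=r_\circ(y)r_{[\cdot,\cdot]}(x)+l_\circ(x)r_{[\cdot,\cdot]}(y)$; $l_{[\cdot,\cdot]}(x)r_\circ(y)=r_\circ(y)l_{[\cdot,\cdot]}(x)+r_\circ([x,y])$; $l_{[\cdot,\cdot]}(x)l_\circ(y)=l_\circ([x,y])+l_\circ(y)l_{[\cdot,\cdot]}(x)$; $r_{[\cdot,\cdot]}(x)r_\circ(y)=r_\circ([y,x])+l_\circ(y)r_{[\cdot,\cdot]}(x)$; $l_{[\cdot,\cdot]}(x\circ y)=l_\circ(x)l_{[\cdot,\cdot]}(y)+l_\circ(y)l_{[\cdot,\cdot]}(x)$; $r_{[\cdot,\cdot]}(x)(l_\circ-r_\circ)(y)=0$; $r_\circ(x)(l_{[\cdot,\cdot]}+r_{[\cdot,\cdot]})(y)=0$; $l_\circ([x,y]+[y,x])=0$. An $\mathcal{O}$-operator on $(A,\circ,[\cdot,\cdot])$ associated to such a representation is a linear map $T:V\to A$ with $T(u)\circ T(v)=T(l_\circ(T(u))v+r_\circ(T(v))u)$ and $[T(u),T(v)]=T(l_{[\cdot,\cdot]}(T(u))v+r_{[\cdot,\cdot]}(T(v))u)$ for all $u,v\in V$. A pre-dual pre-Poisson algebra is a vector space with bilinear operations $\rhd,\lhd,\succ,\prec$ satisfying for all $x,y,z$: $x\lhd(y\lhd z+y\rhd z)=(x\lhd y)\lhd z=(y\rhd x)\lhd z=y\rhd(x\lhd z)$; $x\rhd(y\rhd z)=(x\lhd y+x\rhd y)\rhd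 z=(y\lhd x+y\rhd x)\rhd z$; $(x\prec y+x\succ y)\succ z=x\succ(y\succ z)-y\succ(x\succ z)$; $(x\succ y)\prec z=-(y\prec x)\prec z$; $x\prec(y\prec z+y\succ z)=(x\prec y)\prec z+y\succ(x\prec z)$; $x\prec(y\rhd z+y\lhd z)=(x\prec y)\lhd z+y\rhd(x\prec z)$; $x\succ(y\lhd z)=(x\succ y)\lhd z+y\lhd(x\succ z+x\prec z)$; $x\succ(y\rhd z)=(x\succ y+x\prec y)\rhd z+y\rhd(x\succ z)$; $(x\lhd y)\prec z=x\lhd(y\succ z+y\prec z)+y\rhd(x\prec z)$; $(x\rhd y+x\lhd y)\succ z=x\rhd(y\succ z)+y\rhd(x\succ z)$; $(x\rhd y-y\lhd x)\prec z=0$; $(x\succ y+y\prec x)\lhd z=0$; $(x\succ y+x\prec y+y\succ x+y\prec x)\rhd z=0$. A compatible pre-dual pre-Poisson algebra structure on $(A,\circ,[\cdot,\cdot])$ is a pre-dual pre-Poisson algebra $(A,\rhd,\lhd,\succ,\prec)$ on the same space with $x\circ y=x\rhd y+x\lhd y$ and $[x,y]=x\succ y+x\prec y$ for all $x,y$. *)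

(* Defs.v *)
From HB Require Import structures.
From mathcomp Require Import all_boot all_order all_algebra.
Set Implicit Arguments. Unset Strict Implicit. Unset Printing Implicit Defensive.
Import GRing.Theory.
Local Open Scope ring_scope.

Definition is_bilinear (F : fieldType) (U V W : lmodType F) (f : U -> V -> W) : Prop :=
  (forall x (a : F) y1 y2, f x (a *: y1 + y2) = a *: f x y1 + f x y2) /\
  (forall y (a : F) x1 x2, f (a *: x1 + x2) y = a *: f x1 y + f x2 y).

Definition is_linear_map (F : fieldType) (U W : lmodType F) (f : U -> W) : Prop :=
  forall (a : F) u1 u2, f (a *: u1 + u2) = a *: f u1 + f u2.

Definition is_dual_prePoisson (F : fieldType) (A : lmodType F)
    (circ br : A -> A -> A) : Prop :=
  is_bilinear circ /\ is_bilinear br /\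
  forall x y z,
    (circ x (circ y z) = circ (circ x y) z /\
        circ (circ x y) z = circ (circ y x) z /\
        br x (br y z) = br (br x y) z + br y (br x z) /\
        br x (circ y z) = circ (br x y) z + circ y (br x z) /\
        br (circ x y) z = circ x (br y z) + circ y (br x z)
      /\ circ (br x y) z = - circ (br y x) z).

(* Representation (V; lc, rc, lb, rb) of (A, circ, br); the maps A -> End(V)
   are linear, i.e. (x, v) |-> l(x) v is bilinear.  Equalities of
   endomorphisms are stated pointwise in v. *)
Definition is_dpp_representation (F : fieldType) (A : lmodType F)
    (circ br : A -> A -> A) (V : lmodType F)
    (lc rc lb rb : A -> V -> V) : Prop :=
  is_bilinear lc /\ is_bilinear rc /\ is_bilinear lb /\ is_bilinear rb /\
  forall x y (v : V),
    ((rc x (rc y v) = rc (circ y x) v /\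
            rc (circ y x) v = lc y (rc x v) /\
            lc y (rc x v) = rc x (lc y v) /\
            lc (circ x y) v = lc x (lc y v) /\
            lc x (lc y v) = lc y (lc x v) /\
            lb (br x y) v = lb x (lb y v) - lb y (lb x v)
          /\ rb (br x y) v = rb y (rb x v) + lb x (rb y v)) /\
        (rb x (rb y v) = - rb x (lb y v) /\
            rb (circ x y) v = rc y (rb x v) + lc x (rb y v) /\
            lb x (rc y v) = rc y (lb x v) + rc (br x y) v /\
            lb x (lc y v) = lc (br x y) v + lc y (lb x v) /\
            rb x (rc y v) = rc (br y x) v + lc y (rb x v)
          /\ lb (circ x y) v = lc x (lb y v) + lc y (lb x v)) /\
        rb x (lc y v - rc y v) = 0 /\
        rc x (lb y v + rb y v) = 0
      /\ lc (br x y + br y x) v = 0).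

Definition is_O_operator (F : fieldType) (A : lmodType F)
    (circ br : A -> A -> A) (V : lmodType F)
    (lc rc lb rb : A -> V -> V) (T : V -> A) : Prop :=
  is_linear_map T /\
  forall u v : V,
    circ (T u) (T v) = T (lc (T u) v + rc (T v) u) /\
    br (T u) (T v) = T (lb (T u) v + rb (T v) u).

Definition is_pre_dual_prePoisson (F : fieldType) (A : lmodType F)
    (rhd lhd succ prec : A -> A -> A) : Prop :=
  is_bilinear rhd /\ is_bilinear lhd /\ is_bilinear succ /\ is_bilinear prec /\
  forall x y z,
    ((lhd x (lhd y z + rhd y z) = lhd (lhd x y) z /\
            lhd (lhd x y) z = lhd (rhd y x) z /\
            lhd (rhd y x) z = rhd y (lhd x z) /\
            rhd x (rhd y z) = rhd (lhd x y + rhd x y) z /\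
            rhd (lhd x y + rhd x y) z = rhd (lhd y x + rhd y x) z /\
            succ (prec x y + succ x y) z = succ x (succ y z) - succ y (succ x z)
          /\ prec (succ x y) z = - prec (prec y x) z) /\
        (prec x (prec y z + succ y z) = prec (prec x y) z + succ y (prec x z) /\
            prec x (rhd y z + lhd y z) = lhd (prec x y) z + rhd y (prec x z) /\
            succ x (lhd y z) = lhd (succ x y) z + lhd y (succ x z + prec x z) /\
            succ x (rhd y z) = rhd (succ x y + prec x y) z + rhd y (succ x z) /\
            prec (lhd x y) z = lhd x (succ y z + prec y z) + rhd y (prec x z)
          /\ succ (rhd x y + lhd x y) z = rhd x (succ y z) + rhd y (succ x z)) /\
        prec (rhd x y - lhd y x) z = 0 /\
        lhd (succ x y + prec y x) z = 0
      /\ rhd (succ x y + prec x y + succ y x + prec y x) z = 0).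

Definition has_compatible_pre_dual_prePoisson (F : fieldType) (A : lmodType F)
    (circ br : A -> A -> A) : Prop :=
  exists rhd lhd succ prec : A -> A -> A,
    is_pre_dual_prePoisson rhd lhd succ prec /\
    forall x y, circ x y = rhd x y + lhd x y /\ br x y = succ x y + prec x y.

(* Main.v *)
Require Import Defs.
From HB Require Import structures.
From mathcomp Require Import all_boot all_order all_algebra.
Import GRing.Theory.
Local Open Scope ring_scope.

Lemma bil_swap (F : fieldType) (U V W : lmodType F) (f : U -> V -> W) :
  is_bilinear f -> is_bilinear (fun x v => f v x).
Proof. by move=> [h1 h2]; split => *; [apply: h2 | apply: h1]. Qed.

Lemma lin_facts (F : fieldType) (U W : lmodType F) (f : U -> W) :
  is_linear_map f ->
  (forall u v, f (u + v) = f u + f v) /\ f 0 = 0 /\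
  (forall a u, f (a *: u) = a *: f u) /\ (forall u, f (- u) = - f u).
Proof.
move=> h.
have hadd : forall u v, f (u + v) = f u + f v by move=> u v; have := h 1 u v; rewrite !scale1r.
have h0 : f 0 = 0.
  by apply: (addrI (f 0)); rewrite -hadd !addr0.
have hs : forall a u, f (a *: u) = a *: f u by move=> a u; rewrite -[a *: u]addr0 h h0 addr0.
split=> //; split=> //; split=> // u; by rewrite -scaleN1r hs scaleN1r.
Qed.

Theorem theorem3p29 (F : fieldType) (charF0 : [pchar F] =i pred0)
    (A : lmodType F) (circ br : A -> A -> A) :
  is_dual_prePoisson circ br ->
  (has_compatible_pre_dual_prePoisson circ br <->
   exists (V : lmodType F) (lc rc lb rb : A -> V -> V) (T : V -> A),
     is_dpp_representation circ br lc rc lb rb /\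
     is_O_operator circ br lc rc lb rb T /\ bijective T).
Proof.
move=> _; split.
- case=> [rhd [lhd [succ [prec [[Brh [Blh [Bsu [Bpr Ax]]]] Hc]]]]].
  have hc x y : circ x y = rhd x y + lhd x y by case: (Hc x y).
  have hb x y : br x y = succ x y + prec x y by case: (Hc x y).
  exists A, rhd, (fun x v => lhd v x), succ, (fun x v => prec v x), id.
  split; last split.
  + split; first exact Brh. split; first exact: bil_swap.
    split; first exact Bsu. split; first exact: bil_swap.
    move=> x y v /=.
    repeat split.
    * by have [[a1 _] _] := Ax v y x; rewrite hc addrC a1.
    * by have [[a1 [a2 [a3 _]]] _] := Ax v y x; rewrite hc addrC a1 a2 a3.
    * by have [[a1 [a2 [a3 _]]] _] := Ax v y x; rewrite a3.
    * by have [[a1 [a2 [a3 [a4 _]]]] _] := Ax x y v; rewrite hc addrC a4.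
    * have [[a1 [a2 [a3 [a4 [a5 _]]]]] _] := Ax x y v.
      have [[_ [_ [_ [a4' _]]]] _] := Ax y x v.
      by rewrite a4 a5 a4'.
    * by have [[a1 [a2 [a3 [a4 [a5 [a6 _]]]]]] _] := Ax x y v; rewrite hb addrC a6.
    * by have [_ [[b1 _] _]] := Ax v x y; rewrite hb addrC b1.
    * by have [[a1 [a2 [a3 [a4 [a5 [a6 a7]]]]]] _] := Ax y v x; rewrite a7 opprK.
    * by have [_ [[b1 [b2 _]] _]] := Ax v x y; rewrite hc b2.
    * by have [_ [[b1 [b2 [b3 _]]] _]] := Ax x v y; rewrite hb b3.
    * by have [_ [[b1 [b2 [b3 [b4 _]]]] _]] := Ax x y v; rewrite hb b4.
    * by have [_ [[b1 [b2 [b3 [b4 [b5 _]]]]] _]] := Ax v y x; rewrite hb b5.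
    * by have [_ [[b1 [b2 [b3 [b4 [b5 b6]]]]] _]] := Ax x y v; rewrite hc b6.
    * by have [_ [_ [c1 _]]] := Ax y v x.
    * by have [_ [_ [_ [c2 _]]]] := Ax y v x.
    * by have [_ [_ [_ [_ c3]]]] := Ax x y v; rewrite !hb addrA.
  + split; first by [].
    by move=> u v; rewrite /= hc hb.
  + by exists id.
- case=> [V [lc [rc [lb [rb [T [[Blc [Brc [Blb [Brb R]]]] [[Tlin HO] [S TS ST]]]]]]]]].
  have [Tadd [T0 [Tsc Topp]]] := @lin_facts _ _ _ _ Tlin.
  have Sinj : injective S := can_inj ST.
  have Tinj : injective T := can_inj TS.
  have Sadd u v : S (u + v) = S u + S v by apply: Tinj; rewrite Tadd !ST.
  have Ssc a u : S (a *: u) = a *: S u by apply: Tinj; rewrite Tsc !ST.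
  have Sopp u : S (- u) = - S u by apply: Tinj; rewrite Topp !ST.
  have S0 : S 0 = 0 by apply: Tinj; rewrite T0 ST.
  have hc x y : T (lc x (S y)) + T (rc y (S x)) = circ x y.
    by have [h _] := HO (S x) (S y); rewrite !ST in h; rewrite h Tadd.
  have hc' x y : T (rc y (S x)) + T (lc x (S y)) = circ x y by rewrite addrC hc.
  have hb x y : T (lb x (S y)) + T (rb y (S x)) = br x y.
    by have [_ h] := HO (S x) (S y); rewrite !ST in h; rewrite h Tadd.
  have hb' x y : T (rb y (S x)) + T (lb x (S y)) = br x y by rewrite addrC hb.
  exists (fun x y => T (lc x (S y))), (fun x y => T (rc y (S x))),
         (fun x y => T (lb x (S y))), (fun x y => T (rb y (S x))).
  split; last by move=> x y; rewrite hc hb.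
  split.
    split=> y a x1 x2; apply: Sinj; rewrite !(Sadd, Ssc, TS);
      by [rewrite Blc.1 | rewrite Blc.2].
  split.
    split=> y a x1 x2; apply: Sinj; rewrite !(Sadd, Ssc, TS);
      by [rewrite Brc.1 | rewrite Brc.2].
  split.
    split=> y a x1 x2; apply: Sinj; rewrite !(Sadd, Ssc, TS);
      by [rewrite Blb.1 | rewrite Blb.2].
  split.
    split=> y a x1 x2; apply: Sinj; rewrite !(Sadd, Ssc, TS);
      by [rewrite Brb.1 | rewrite Brb.2].
  move=> x y z.
  repeat split.
  all: apply: Sinj; rewrite !(Sadd, Ssc, Sopp, S0, TS) ?hc ?hc' ?hb ?hb'.
  - by have [[r1 _] _] := R z y (S x).
  - have [[r1 [r2 [r3 _]]] _] := R z y (S x). by rewrite r1 r2 r3.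
  - by have [[r1 [r2 [r3 _]]] _] := R z y (S x).
  - by have [[r1 [r2 [r3 [r4 _]]]] _] := R x y (S z).
  - have [[r1 [r2 [r3 [r4 [r5 _]]]]] _] := R x y (S z).
    have [[_ [_ [_ [r4' _]]]] _] := R y x (S z).
    by rewrite r4 r5 r4'.
  - by have [[r1 [r2 [r3 [r4 [r5 [r6 _]]]]]] _] := R x y (S z).
  - by have [_ [[q1 _] _]] := R z x (S y); rewrite q1 opprK.
  - by have [[r1 [r2 [r3 [r4 [r5 [r6 r7]]]]]] _] := R y z (S x).
  - by have [_ [[q1 [q2 _]] _]] := R y z (S x).
  - by have [_ [[q1 [q2 [q3 _]]] _]] := R x z (S y).
  - by have [_ [[q1 [q2 [q3 [q4 _]]]] _]] := R x y (S z).
  - by have [_ [[q1 [q2 [q3 [q4 [q5 _]]]]] _]] := R z y (S x).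
  - by have [_ [[q1 [q2 [q3 [q4 [q5 q6]]]]] _]] := R x y (S z).
  - by have [_ [_ [c1 _]]] := R z x (S y).
  - by have [_ [_ [_ [c2 _]]]] := R z x (S y).
  - by have [_ [_ [_ [_ c3]]]] := R x y (S z); rewrite -addrA hb.
Qed.
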